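(* Let $\Sigma$ be an infinite alphabet and let $\mathcal{A}_1$, $\mathcal{A}_2$ be guarded variable automata (GVAs) over $\Sigma$. Then there exist GVAs over $\Sigma$ recognizing, respectively, the concatenation $L(\mathcal{A}_1)\cdot L(\mathcal{A}_2)$, the Kleene closure $L(\mathcal{A}_1)^{\star}$, and the intersection $L(\mathcal{A}_1)\cap L(\mathcal{A}_2)$. That is, the class of GVA-recognizable languages is closed under concatenation, Kleene star and intersection.
   Context: Fix an infinite alphabet $\Sigma$. A guard over a set of variables $\mathcal{X}$ (disjoint from $\Sigma$) is built by the grammar $g ::= \mathit{true} \mid \alpha=\beta \mid \alpha\neq\beta \mid g\wedge g$ with $\alpha,\beta\in\Sigma\cup\mathcal{X}$. A GVA is a tuple $\mathcal{A}=\langle\Sigma,\mathcal{X},Q,Q_0,\delta,F,\kappa\rangle$ where $\mathcal{X}$ is a finite set of variables, $Q$ a finite set of states, $Q_0\subseteq Q$ the initial states, $F\subseteq Q$ the accepting states, $\delta$ a finite set of transitions $q\xrightarrow{\alpha,g}q'$ with $q,q'\in Q$, $\alpha\in\Sigma\cup\mathcal{X}\cup\{\varepsilon\}$ and $g$ a guard, and $\kappa:\mathcal{X}\to 2^{Q}$ the refreshing function ($\kappa(x)$ is the set of states in which $x$ is freed). The finite set $\Sigma_{\mathcal{A}}$ of letters occurring in $\delta$ are the constants of $\mathcal{A}$. A configuration is a pair $(\sigma,q)$ with $q\in Q$ and $\sigma$ a partial map $\mathcal{X}\to\Sigma$ (the currently bound variables). There is a step $(\sigma,q)\xrightarrow{a}(\sigma',q')$,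 $a\in\Sigma\cup\{\varepsilon\}$, if there is a transition $q\xrightarrow{\alpha,g}q'$ and a map $\gamma$ from the variables occurring in $\alpha$ or $g$ that are not in $\mathrm{dom}(\sigma)$ to $\Sigma$ such that, with $\rho=\sigma\uplus\gamma$ (extended to be the identity on letters), $\rho$ satisfies $g$, $a=\rho(\alpha)$ if $\alpha\neq\varepsilon$ and $a=\varepsilon$ if $\alpha=\varepsilon$, and $\sigma'$ is the restriction of $\rho$ to $\{x\in\mathrm{dom}(\rho) : q'\notin\kappa(x)\}$. A word $w\in\Sigma^{\star}$ is accepted if there is a sequence of steps from $(\emptyset,q_0)$ with $q_0\in Q_0$ to some $(\sigma,q_f)$ with $q_f\in F$ whose labels concatenate to $w$; $L(\mathcal{A})$ is the set of accepted words. *)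

(* Defs.v *)
From mathcomp Require Import all_boot.
From Stdlib Require List.
Set Implicit Arguments. Unset Strict Implicit. Unset Printing Implicit Defensive.

Definition infinite_alphabet (Sigma : Type) : Prop :=
  forall l : list Sigma, exists a : Sigma, ~ List.In a l.

Section GVADefs.
Variable Sigma : Type.

Inductive sym (X : Type) : Type :=
| SLet : Sigma -> sym X
| SVar : X -> sym X.

Inductive label (X : Type) : Type :=
| LEps : label X
| LSym : sym X -> label X.

Inductive guard (X : Type) : Type :=
| GTrue : guard X
| GEq : sym X -> sym X -> guard X
| GNeq : sym X -> sym X -> guard X
| GAnd : guard X -> guard X -> guard X.

Record GVA : Type := {
  gst : finType;
  gvar : finType;
  ginit : {set gst};
  gfinal : {set gst};
  gdelta : list (gst * label gvar * guard gvar * gst);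
  gkappa : gvar -> {set gst}
}.

Definition sym_vars (X : Type) (s : sym X) : seq X :=
  match s with SLet _ => [::] | SVar x => [:: x] end.

Definition label_vars (X : Type) (l : label X) : seq X :=
  match l with LEps => [::] | LSym s => sym_vars s end.

Fixpoint guard_vars (X : Type) (g : guard X) : seq X :=
  match g with
  | GTrue => [::]
  | GEq a b => sym_vars a ++ sym_vars b
  | GNeq a b => sym_vars a ++ sym_vars b
  | GAnd g1 g2 => guard_vars g1 ++ guard_vars g2
  end.

Definition sym_val (X : Type) (rho : X -> option Sigma) (s : sym X) : option Sigma :=
  match s with SLet a => Some a | SVar x => rho x end.

Fixpoint sat (X : Type) (rho : X -> option Sigma) (g : guard X) : Prop :=
  match g with
  | GTrue => True
  | GEq a b => exists c, sym_val rho a = Some c /\ sym_val rho b = Some c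
  | GNeq a b => exists c d, sym_val rho a = Some c /\ sym_val rho b = Some d /\ c <> d
  | GAnd g1 g2 => sat rho g1 /\ sat rho g2
  end.

(** One step (σ,q) -a-> (σ',q'), with a = None standing for ε. *)
Definition gstep (A : GVA) (sigma : gvar A -> option Sigma) (q : gst A)
    (a : option Sigma) (sigma' : gvar A -> option Sigma) (q' : gst A) : Prop :=
  exists (alpha : label (gvar A)) (g : guard (gvar A)),
    List.In (q, alpha, g, q') (gdelta A) /\
    exists rho : gvar A -> option Sigma,
      (* rho = sigma ⊎ gamma, gamma defined exactly on the variables of
         alpha, g that are not in dom sigma *)
      (forall x c, sigma x = Some c -> rho x = Some c) /\
      (forall x, sigma x = None ->
         (rho x <> None <-> (x \in label_vars alpha) || (x \in guard_vars g))) /\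
      sat rho g /\
      (match alpha with
       | LEps => a = None
       | LSym s => a <> None /\ a = sym_val rho s
       end) /\
      (forall x, sigma' x = if q' \in @gkappa A x then None else rho x).

Inductive gruns (A : GVA) :
    (gvar A -> option Sigma) -> gst A -> list Sigma ->
    (gvar A -> option Sigma) -> gst A -> Prop :=
| gruns_nil : forall sigma q, gruns sigma q nil sigma q
| gruns_cons : forall sigma q a sigma1 q1 w sigma2 q2,
    gstep sigma q a sigma1 q1 -> gruns sigma1 q1 w sigma2 q2 ->
    gruns sigma q (match a with None => w | Some b => b :: w end) sigma2 q2.

Definition empty_val (A : GVA) : gvar A -> option Sigma := fun _ => None.

Definition lang (A : GVA) (w : list Sigma) : Prop :=
  exists q0 sigma qf, q0 \in ginit A /\ qf \in gfinal A /\
    @gruns A (fun _ => None) q0 w sigma qf.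

Definition lconcat (L1 L2 : list Sigma -> Prop) (w : list Sigma) : Prop :=
  exists u v, L1 u /\ L2 v /\ w = u ++ v.

Inductive lstar (L : list Sigma -> Prop) : list Sigma -> Prop :=
| lstar_nil : lstar L nil
| lstar_app : forall u v, L u -> lstar L v -> lstar L (u ++ v).

Definition linter (L1 L2 : list Sigma -> Prop) (w : list Sigma) : Prop :=
  L1 w /\ L2 w.

Definition recognizes (A : GVA) (L : list Sigma -> Prop) : Prop :=
  forall w, lang A w <-> L w.

End GVADefs.

(* Main.v *)
Require Import Defs.
From mathcomp Require Import all_boot.
From Stdlib Require Import FunctionalExtensionality.
From Stdlib Require List.
Set Implicit Arguments. Unset Strict Implicit. Unset Printing Implicit Defensive.

Definition map_sym (S X Y : Type) (f : X -> Y) (s : sym S X) : sym S Y :=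
  match s with SLet a => SLet Y a | SVar x => SVar S (f x) end.
Definition map_label (S X Y : Type) (f : X -> Y) (l : label S X) : label S Y :=
  match l with LEps => LEps S Y | LSym s => LSym (map_sym f s) end.
Fixpoint map_guard (S X Y : Type) (f : X -> Y) (g : guard S X) : guard S Y :=
  match g with
  | GTrue => GTrue S Y
  | GEq a b => GEq (map_sym f a) (map_sym f b)
  | GNeq a b => GNeq (map_sym f a) (map_sym f b)
  | GAnd g1 g2 => GAnd (map_guard f g1) (map_guard f g2)
  end.

Lemma sym_val_map S X Y (f : X -> Y) (rho : Y -> option S) s :
  sym_val rho (map_sym f s) = sym_val (fun x => rho (f x)) s.
Proof. by case: s. Qed.

Lemma sat_map S X Y (f : X -> Y) (rho : Y -> option S) g :
  sat rho (map_guard f g) = sat (fun x => rho (f x)) g.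
Proof.
elim: g => //= [a b|a b|g1 IH1 g2 IH2]; by rewrite ?sym_val_map ?IH1 ?IH2.
Qed.

Lemma sym_vars_map S (X Y : eqType) (f : X -> Y) (s : sym S X) :
  sym_vars (map_sym f s) = map f (sym_vars s).
Proof. by case: s. Qed.

Lemma label_vars_map S (X Y : eqType) (f : X -> Y) (l : label S X) :
  label_vars (map_label f l) = map f (label_vars l).
Proof. case: l => //= s; exact: sym_vars_map. Qed.

Lemma guard_vars_map S (X Y : eqType) (f : X -> Y) (g : guard S X) :
  guard_vars (map_guard f g) = map f (guard_vars g).
Proof.
elim: g => [|a b|a b|g1 IH1 g2 IH2] //=; by rewrite ?sym_vars_map ?IH1 ?IH2 ?map_cat.
Qed.

Definition via S (A : GVA S) (alpha : label S (gvar A)) (g : guard S (gvar A))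
  (q' : gst A) (sigma : gvar A -> option S) (a : option S)
  (sigma' : gvar A -> option S) : Prop :=
    exists rho : gvar A -> option S,
      (forall x c, sigma x = Some c -> rho x = Some c) /\
      (forall x, sigma x = None ->
         (rho x <> None <-> (x \in label_vars alpha) || (x \in guard_vars g))) /\
      sat rho g /\
      (match alpha with
       | LEps => a = None
       | LSym s => a <> None /\ a = sym_val rho s
       end) /\
      (forall x, sigma' x = if q' \in @gkappa S A x then None else rho x).

Lemma gstepE S (A : GVA S) sigma q a sigma' q' :
  gstep sigma q a sigma' q' <->
  exists alpha g, List.In (q, alpha, g, q') (gdelta A) /\ via alpha g q' sigma a sigma'.
Proof. split; move=> [al [g [H1 H2]]]; exists al, g; split; assumption. Qed.

Lemma gruns_trans S (A : GVA S) s q u s1 q1 v s2 q2 :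
  @gruns S A s q u s1 q1 -> gruns s1 q1 v s2 q2 -> gruns s q (u ++ v) s2 q2.
Proof.
elim=> [//|? ? a ? ? w ? ? Hs _ IH] H.
have X := gruns_cons Hs (IH H); clear Hs; by case: a X.
Qed.

Definition wf S (A : GVA S) (sigma : gvar A -> option S) (q : gst A) :=
  forall x, q \in gkappa x -> sigma x = None.

Lemma step_wf S (A : GVA S) s q a s' q' : @gstep S A s q a s' q' -> wf s' q'.
Proof.
move=> [al [g [_ [rho [_ [_ [_ [_ H]]]]]]]] x Hx; by rewrite H Hx.
Qed.

Lemma runs_wf S (A : GVA S) s q w s' q' : @gruns S A s q w s' q' -> wf s q -> wf s' q'.
Proof.
elim=> // ? ? ? ? ? ? ? ? Hs _ IH _; apply: IH; exact: step_wf Hs.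
Qed.

Lemma runs_decomp S (A : GVA S) s q c w s' q' : @gruns S A s q (c :: w) s' q' ->
  exists s0 q0 s1 q1, gruns s q nil s0 q0 /\ gstep s0 q0 (Some c) s1 q1 /\
     gruns s1 q1 w s' q'.
Proof.
move Ew: (c :: w) => w0 H; elim: H c w Ew => // s0 q0 a s1 q1 w0' s2 q2 Hs Hr IH c w.
case: a Hs => [b|] Hs /= Ew.
- case: Ew => -> ->; exists s0, q0, s1, q1; split; [exact: gruns_nil| by split].
- have [t0 [p0 [t1 [p1 [H1 [H2 H3]]]]]] := IH _ _ Ew.
  exists t0, p0, t1, p1; split => //.
  exact: (gruns_cons (a:=None) Hs H1).
Qed.

Lemma In_mem (T : eqType) (x : T) (s : seq T) : List.In x s <-> x \in s.
Proof.
elim: s => //= y s IH; rewrite in_cons; split.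
- case=> [->|/IH ->]; by rewrite ?eqxx ?orbT.
- case/orP=> [/eqP->|/IH]; by auto.
Qed.

Definition liftT S (QA QB XA XB : Type) (fq : QA -> QB) (fx : XA -> XB)
  (t : QA * label S XA * guard S XA * QA) : QB * label S XB * guard S XB * QB :=
  match t with (q, al, g, q') => (fq q, map_label fx al, map_guard fx g, fq q') end.

Lemma in_liftT S (QA QB XA XB : Type) (fq : QA -> QB) (fx : XA -> XB) l p be h p' :
  List.In (p, be, h, p') (List.map (@liftT S _ _ _ _ fq fx) l) ->
  exists q al g q', List.In (q, al, g, q') l /\ p = fq q /\ be = map_label fx al /\
     h = map_guard fx g /\ p' = fq q'.
Proof.
move/List.in_map_iff=> [[[[q al] g] q'] [E H]]; case: E => <- <- <- <-.
by exists q, al, g, q'.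
Qed.

Definition emb (XA XB S : Type) (finv : XB -> option XA) (tau0 : XB -> option S)
  (s : XA -> option S) (y : XB) : option S :=
  match finv y with Some x => s x | None => tau0 y end.

Lemma via_lift_fwd S (A B : GVA S) (fq : gst A -> gst B) (fx : gvar A -> gvar B)
  (finv : gvar B -> option (gvar A))
  (Hinv : forall x y, finv y = Some x <-> fx x = y) tau0 al g q' s a s'
  (Hk : forall x, (fq q' \in gkappa (fx x)) = (q' \in gkappa x))
  (Ho : forall y, finv y = None -> fq q' \in gkappa y -> tau0 y = None) :
  via al g q' s a s' ->
  via (map_label fx al) (map_guard fx g) (fq q') (emb finv tau0 s) a (emb finv tau0 s').
Proof.
have Hf : forall x, finv (fx x) = Some x by move=> x; apply/Hinv.
have inj : injective fx.
  by move=> x1 x2 E; have := Hf x1; rewrite E Hf; case.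
have Hn : forall y l, finv y = None -> (y \in map fx l) = false.
  move=> y l Hy; apply/negP => /mapP [x _ Ey]; by rewrite Ey Hf in Hy.
move=> [rho [H1 [H2 [H3 [H4 H5]]]]].
have Ec : (fun x => emb finv tau0 rho (fx x)) = rho.
  by apply: functional_extensionality => x; rewrite /emb Hf.
exists (emb finv tau0 rho); split; [|split; [|split; [|split]]].
- rewrite /emb => y c; case E: (finv y) => [x|] //.
  by apply: H1.
- rewrite /emb label_vars_map guard_vars_map => y; case E: (finv y) => [x|].
  + move/Hinv: E => <-; rewrite !(mem_map inj) ?Hf; exact: H2.
  + by move=> ->; rewrite !Hn.
- by rewrite sat_map Ec.
- by clear H2; case: al H4 => //= sy; rewrite sym_val_map Ec.
- rewrite /emb => y; case E: (finv y) => [x|].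
  + move/Hinv: E => <-; by rewrite ?Hf H5 Hk.
  + case: ifP => // Hy; exact: Ho.
Qed.

Lemma via_lift_bwd S (A B : GVA S) (fq : gst A -> gst B) (fx : gvar A -> gvar B)
  (finv : gvar B -> option (gvar A))
  (Hinv : forall x y, finv y = Some x <-> fx x = y) tau0 al g q' s a tau'
  (Hk : forall x, (fq q' \in gkappa (fx x)) = (q' \in gkappa x))
  (Ho : forall y, finv y = None -> fq q' \in gkappa y -> tau0 y = None) :
  via (map_label fx al) (map_guard fx g) (fq q') (emb finv tau0 s) a tau' ->
  exists s', tau' = emb finv tau0 s' /\ via al g q' s a s'.
Proof.
have Hf : forall x, finv (fx x) = Some x by move=> x; apply/Hinv.
have inj : injective fx.
  by move=> x1 x2 E; have := Hf x1; rewrite E Hf; case.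
have Hn : forall y l, finv y = None -> (y \in map fx l) = false.
  move=> y l Hy; apply/negP => /mapP [x _ Ey]; by rewrite Ey Hf in Hy.
move=> [rho [H1 [H2 [H3 [H4 H5]]]]].
exists (fun x => tau' (fx x)); split.
  apply: functional_extensionality => y; rewrite /emb; case E: (finv y) => [x|].
  - by move/Hinv: E => <-.
  - rewrite H5; case: ifP => Hy; first by rewrite Ho.
    have := H1 y; rewrite /emb E; case E2: (tau0 y) => [c|]; first by move/(_ c erefl).
    move=> _; have := H2 y; rewrite /emb E E2 label_vars_map guard_vars_map !Hn //.
    by case: (rho y) => // c /(_ erefl) [] /(_ ltac:(discriminate)).
exists (fun x => rho (fx x)); split; [|split; [|split; [|split]]].
- move=> x c Hx; apply: H1; by rewrite /emb Hf.
- move=> x Hx; have := H2 (fx x); rewrite /emb Hf label_vars_map guard_vars_map !(mem_map inj).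
  by move/(_ Hx).
- by rewrite -sat_map.
- by clear H2; case: al H4 => //= sy; rewrite sym_val_map.
- by move=> x; rewrite H5 Hk.
Qed.

Lemma lift_runs_fwd S (A B : GVA S) (fq : gst A -> gst B) (fx : gvar A -> gvar B)
  (finv : gvar B -> option (gvar A))
  (Hinv : forall x y, finv y = Some x <-> fx x = y) tau0
  (HD : forall t, List.In t (gdelta A) -> List.In (liftT fq fx t) (gdelta B))
  (Hk : forall x q', (fq q' \in gkappa (fx x)) = (q' \in gkappa x))
  (Ho : forall y q', finv y = None -> fq q' \in gkappa y -> tau0 y = None)
  s q w s' q' :
  gruns s q w s' q' -> gruns (emb finv tau0 s) (fq q) w (emb finv tau0 s') (fq q').
Proof.
elim=> [s0 q0|s0 q0 a s1 q1 w0 s2 q2 Hs _ IH]; first exact: gruns_nil.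
suff Hst : gstep (emb finv tau0 s0) (fq q0) a (emb finv tau0 s1) (fq q1) by exact: gruns_cons Hst IH.
move/gstepE: Hs => [al [g [Hin Hv]]].
apply/gstepE; exists (map_label fx al), (map_guard fx g); split.
  exact: (HD _ Hin).
exact: (via_lift_fwd Hinv (fun x => Hk x q1) (fun y H => Ho y q1 H) Hv).
Qed.

Lemma via_eps S (A : GVA S) p sigma a sigma' :
  via (LEps S (gvar A)) (GTrue S (gvar A)) p sigma a sigma' <->
  a = None /\ forall x, sigma' x = if p \in gkappa x then None else sigma x.
Proof.
split.
- move=> [rho [H1 [H2 [_ [H4 H5]]]]]; split => // x; rewrite H5.
  case: ifP => // _; case E: (sigma x) => [c|]; first exact: H1.
  have [H _] := H2 x E; case: (rho x) H => // c H.
  by have := H ltac:(discriminate); rewrite /= in_nil.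
- move=> [-> H]; exists sigma; do 4 (split => //).
Qed.

Definition finvL (X Y : Type) (z : X + Y) : option X :=
  match z with inl x => Some x | inr _ => None end.
Definition finvR (X Y : Type) (z : X + Y) : option Y :=
  match z with inr x => Some x | inl _ => None end.

Lemma finvLP (X Y : Type) : forall (x : X) (y : X + Y), finvL y = Some x <-> inl x = y.
Proof. by move=> x [y|y] /=; split => // [[->]|[->]]. Qed.
Lemma finvRP (X Y : Type) : forall (x : Y) (y : X + Y), finvR y = Some x <-> inr x = y.
Proof. by move=> x [y|y] /=; split => // [[->]|[->]]. Qed.

Lemma emb_none (XA XB S : Type) (finv : XB -> option XA) :
  emb finv (fun _ => None) (fun _ : XA => @None S) = (fun _ => None).
Proof. apply: functional_extensionality => y; rewrite /emb; by case: (finv y). Qed.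

Definition isr (X Y : Type) (z : X + Y) : bool := if z is inr _ then true else false.

Definition concatG S (A1 A2 : GVA S) : GVA S :=
  @Build_GVA S (gst A1 + gst A2)%type (gvar A1 + gvar A2)%type
    [set inl q | q in ginit A1] [set inr q | q in gfinal A2]
    (List.map (liftT inl inl) (gdelta A1) ++ (List.map (liftT inr inr) (gdelta A2) ++
     List.flat_map (fun f => List.map (fun q0 =>
          (inl f, LEps S _, GTrue S _, inr q0)) (enum (ginit A2))) (enum (gfinal A1))))
    (fun z => match z with
              | inl x => [set inl q | q in gkappa x] :|: [set p | isr p]
              | inr y => [set inr q | q in gkappa y] end).

Lemma concat_fwd S (A1 A2 : GVA S) u v : lang A1 u -> lang A2 v -> lang (concatG A1 A2) (u ++ v).
Proof.
move=> [q1 [s1 [f1 [Hq1 [Hf1 R1]]]]] [q2 [s2 [f2 [Hq2 [Hf2 R2]]]]].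
have L1 := @lift_runs_fwd S A1 (concatG A1 A2) inl inl (@finvL _ _) (@finvLP _ _)
  (fun _ => None).
have L2 := @lift_runs_fwd S A2 (concatG A1 A2) inr inr (@finvR _ _) (@finvRP _ _)
  (fun _ => None).
have {}L1 := L1 (fun t Ht => List.in_or_app _ _ _ (or_introl (List.in_map _ _ _ Ht))).
have {}L2 := L2 (fun t Ht => List.in_or_app _ _ _ (or_intror
                   (List.in_or_app _ _ _ (or_introl (List.in_map _ _ _ Ht))))).
have {}L1 := L1 _ (fun _ _ _ _ => erefl) _ _ _ _ _ R1.
have {}L2 := L2 _ (fun _ _ _ _ => erefl) _ _ _ _ _ R2.
rewrite !emb_none in L1 L2.
exists (inl q1), (emb (@finvR _ _) (fun _ => None) s2), (inr f2); split; [|split].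
- exact: imset_f.
- exact: imset_f.
apply: gruns_trans (L1 _) _.
- by move=> x q'; rewrite /= in_setU inE (mem_imset _ _ (@inl_inj _ _)) orbF.
have Hk2 : forall (x : gvar A2) (q' : gst A2), (inr q' \in @gkappa S (concatG A1 A2) (inr x)) = (q' \in gkappa x).
  by move=> x q'; rewrite /= (mem_imset _ _ (@inr_inj _ _)).
apply: (gruns_cons (a := None)) (L2 Hk2).
apply/gstepE; exists (LEps S _), (GTrue S _); split.
- apply: List.in_or_app; right; apply: List.in_or_app; right.
  apply/List.in_flat_map; exists f1; split; first by apply/In_mem; rewrite mem_enum.
  apply/List.in_map_iff; exists q2; split => //; by apply/In_mem; rewrite mem_enum.
apply/via_eps; split => // -[x|y] /=.
- by rewrite in_setU inE orbT.
- by rewrite /emb /=; case: ifP.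
Qed.

Lemma concat_HkL S (A1 A2 : GVA S) (x : gvar A1) (q' : gst A1) :
  (inl q' \in @gkappa S (concatG A1 A2) (inl x)) = (q' \in gkappa x).
Proof. by rewrite /= in_setU inE (mem_imset _ _ (@inl_inj _ _)) orbF. Qed.
Lemma concat_HkR S (A1 A2 : GVA S) (x : gvar A2) (q' : gst A2) :
  (inr q' \in @gkappa S (concatG A1 A2) (inr x)) = (q' \in gkappa x).
Proof. by rewrite /= (mem_imset _ _ (@inr_inj _ _)). Qed.

Lemma concat_bwd S (A1 A2 : GVA S) tau p w tau' p' :
  @gruns S (concatG A1 A2) tau p w tau' p' ->
  (forall q s, p = inr q -> tau = emb (@finvR _ _) (fun _ => None) s ->
     exists s' q', p' = inr q' /\ gruns s q w s' q') /\
  (forall q s, p = inl q -> tau = emb (@finvL _ _) (fun _ => None) s ->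
     (exists s' q', p' = inl q' /\ gruns s q w s' q') \/
     exists u v s1 f q0 s' q', w = u ++ v /\ gruns s q u s1 f /\ f \in gfinal A1 /\
       q0 \in ginit A2 /\ p' = inr q' /\ gruns (fun _ => None) q0 v s' q').
Proof.
elim=> [t0 p0|t0 p0 a t1 p1 w0 t2 p2 Hs _ [IHr IHl]].
  split=> q s -> _; [exists s, q | left; exists s, q]; split => //; exact: gruns_nil.
move/gstepE: Hs => [be [h [Hin Hv]]].
case/List.in_app_iff: Hin => [Hin|/List.in_app_iff [Hin|Hin]].
- have [q0 [al [g [q1 [Hin1 [E1 [E2 [E3 E4]]]]]]]] := in_liftT Hin.
  subst p0 be h p1; split=> q s Ep Et; first by [].
  case: Ep => Eq; subst q t0.
  have [s1 [Et1 Hv1]] := @via_lift_bwd S A1 (concatG A1 A2) inl inl _ (@finvLP _ _) _ _ _ _ _ _ _ (@concat_HkL S A1 A2 ^~ q1)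
     (fun _ _ _ => erefl) Hv.
  have Hst : gstep s q0 a s1 q1 by apply/gstepE; exists al, g.
  case: (IHl q1 s1 erefl Et1) =>
     [[s' [q' [-> R]]]|[u [v [s1' [f [q2 [s' [q' [Ew [R1 [Hf [Hq [-> R2]]]]]]]]]]]]].
  + left; exists s', q'; split => //; exact: gruns_cons Hst R.
  + right; exists (match a with None => u | Some b => b :: u end), v, s1', f, q2, s', q'.
    split; first by rewrite Ew; case: (a).
    split; first exact: gruns_cons Hst R1.
    by [].
- have [q0 [al [g [q1 [Hin1 [E1 [E2 [E3 E4]]]]]]]] := in_liftT Hin.
  subst p0 be h p1; split=> q s Ep Et; last by [].
  case: Ep => Eq; subst q t0.
  have [s1 [Et1 Hv1]] := @via_lift_bwd S A2 (concatG A1 A2) inr inr _ (@finvRP _ _) _ _ _ _ _ _ _ (@concat_HkR S A1 A2 ^~ q1)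
     (fun _ _ _ => erefl) Hv.
  have Hst : gstep s q0 a s1 q1 by apply/gstepE; exists al, g.
  have [s' [q' [-> R]]] := IHr q1 s1 erefl Et1.
  exists s', q'; split => //; exact: gruns_cons Hst R.
- move/List.in_flat_map: Hin => [f [Hf /List.in_map_iff [q0 [E Hq0]]]].
  case: E => E1 E2 E3 E4; subst p0 be h p1.
  split=> q s Ep Et; first by [].
  case: Ep => Eq; subst q t0.
  move/via_eps: Hv => [Ea Ht1]; subst a.
  have Et1 : t1 = emb (@finvR _ _) (fun _ => None) (fun _ => None).
    rewrite emb_none; apply: functional_extensionality => -[x|y]; rewrite Ht1 /=.
    * by rewrite in_setU inE orbT.
    * by rewrite /emb /=; case: ifP.
  have [s' [q' [-> R]]] := IHr q0 (fun _ => None) erefl Et1.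
  right; exists nil, w0, s, f, q0, s', q'; split => //; split; first exact: gruns_nil.
  move/In_mem: Hf; rewrite mem_enum => Hf; move/In_mem: Hq0; rewrite mem_enum => Hq0.
  by [].
Qed.

Lemma concat_correct S (A1 A2 : GVA S) :
  recognizes (concatG A1 A2) (lconcat (lang A1) (lang A2)).
Proof.
move=> w; split.
- move=> [p0 [tau [pf [Hp0 [Hpf R]]]]].
  move: Hp0 => /imsetP [q0 Hq0 Ep0]; move: Hpf => /imsetP [qf Hqf Epf].
  have := (concat_bwd R).2 q0 (fun _ => None) Ep0 (esym (emb_none _ _)).
  case=> [[s' [q' [Eq _]]]|]; first by rewrite Epf in Eq.
  move=> [u [v [s1 [f [q1 [s' [q' [Ew [R1 [Hf [Hq [Eq R2]]]]]]]]]]]].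
  exists u, v; split; [by exists q0, s1, f|split => //].
  rewrite Epf in Eq; case: Eq => Eq; subst q'.
  by exists q1, s', qf.
- move=> [u [v [Hu [Hv ->]]]]; exact: concat_fwd.
Qed.

Definition starG S (A : GVA S) : GVA S :=
  @Build_GVA S (option (gst A)) (gvar A) [set None] [set None]
    (List.map (liftT Some (fun x => x)) (gdelta A) ++
     (List.map (fun q0 => (None, LEps S _, GTrue S _, Some q0)) (enum (ginit A)) ++
      List.map (fun f => (Some f, LEps S _, GTrue S _, None)) (enum (gfinal A))))
    (fun x => [set Some q | q in gkappa x] :|: [set None]).

Lemma finvSP (X : Type) : forall (x y : X), Some y = Some x <-> x = y.
Proof. by move=> x y; split => [[->]|->]. Qed.

Lemma star_Hk S (A : GVA S) (x : gvar A) (q' : gst A) :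
  (Some q' \in @gkappa S (starG A) x) = (q' \in gkappa x).
Proof. by rewrite /= in_setU inE (mem_imset _ _ (@Some_inj _)) orbF. Qed.

Lemma star_fwd S (A : GVA S) w : lstar (lang A) w ->
  @gruns S (starG A) (fun _ => None) None w (fun _ => None) None.
Proof.
elim=> [|u v [q0 [s1 [f [Hq0 [Hf R]]]]] _ IH]; first exact: gruns_nil.
have L := @lift_runs_fwd S A (starG A) Some (fun x => x) (fun y => Some y) (@finvSP _)
  (fun _ => None) (fun t Ht => List.in_or_app _ _ _ (or_introl (List.in_map _ _ _ Ht)))
  (@star_Hk S A) (fun _ _ E => ltac:(discriminate E)) _ _ _ _ _ R.
rewrite /emb /= in L.
apply: (gruns_cons (a := None) (sigma1 := fun _ => None)).
  apply/gstepE; exists (LEps S _), (GTrue S _); split.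
  - apply: List.in_or_app; right; apply: List.in_or_app; left.
    apply/List.in_map_iff; exists q0; split => //; by apply/In_mem; rewrite mem_enum.
  - apply/via_eps; split => // x; by case: ifP.
apply: gruns_trans L _.
apply: (gruns_cons (a := None) (sigma1 := fun _ => None)) IH.
apply/gstepE; exists (LEps S _), (GTrue S _); split.
- apply: List.in_or_app; right; apply: List.in_or_app; right.
  apply/List.in_map_iff; exists f; split => //; by apply/In_mem; rewrite mem_enum.
- apply/via_eps; split => // x; by rewrite /= in_setU inE eqxx orbT.
Qed.

Lemma star_bwd S (A : GVA S) tau p w tau' p' :
  @gruns S (starG A) tau p w tau' p' -> p' = None ->
  (p = None -> tau = (fun _ => None) -> lstar (lang A) w) /\
  (forall q, p = Some q -> exists u v s1 f, w = u ++ v /\ @gruns S A tau q u s1 f /\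
      f \in gfinal A /\ lstar (lang A) v).
Proof.
elim=> [t0 p0|t0 p0 a t1 p1 w0 t2 p2 Hs _ IH] Ep.
  by split=> [_ _|q Eq]; [exact: lstar_nil|rewrite Ep in Eq].
have [IHn IHs] := IH Ep.
move/gstepE: Hs => [be [h [Hin Hv]]].
case/List.in_app_iff: Hin => [Hin|/List.in_app_iff [Hin|Hin]].
- have [q0 [al [g [q1 [Hin1 [E1 [E2 [E3 E4]]]]]]]] := in_liftT Hin.
  subst p0 be h p1; split=> [//|q [Eq]]; subst q.
  have [s1 [Et1 Hv1]] := @via_lift_bwd S A (starG A) Some (fun x => x) (fun y => Some y)
     (@finvSP _) (fun _ => None) _ _ _ t0 _ _ (@star_Hk S A ^~ q1)
     (fun _ E => ltac:(discriminate E)) Hv.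
  have Hst : @gstep S A t0 q0 a s1 q1 by apply/gstepE; exists al, g.
  rewrite /emb /= in Et1; subst t1.
  have [u [v [s1' [f [Ew [R1 [Hf Hv']]]]]]] := IHs q1 erefl.
  exists (match a with None => u | Some b => b :: u end), v, s1', f.
  split; first by rewrite Ew; case: (a).
  split; first exact: gruns_cons Hst R1.
  by [].
- move/List.in_map_iff: Hin => [q0 [E Hq0]]; case: E => E1 E2 E3 E4.
  subst p0 be h p1; split=> [_ Et|//]; subst t0.
  move/via_eps: Hv => [Ea Ht1]; subst a.
  have Et1 : t1 = (fun _ => None).
    by apply: functional_extensionality => x; rewrite Ht1; case: ifP.
  have [u [v [s1 [f [Ew [R1 [Hf Hv']]]]]]] := IHs q0 erefl.
  rewrite Ew; apply: lstar_app => //.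
  move/In_mem: Hq0; rewrite mem_enum => Hq0.
  exists q0, s1, f; split => //; split => //; by rewrite -Et1.
- move/List.in_map_iff: Hin => [f [E Hf]]; case: E => E1 E2 E3 E4.
  subst p0 be h p1; split=> [//|q [Eq]]; subst q.
  move/via_eps: Hv => [Ea Ht1]; subst a.
  have Et1 : t1 = (fun _ => None).
    by apply: functional_extensionality => x; rewrite Ht1 /= in_setU inE eqxx orbT.
  have Hl := IHn erefl Et1.
  move/In_mem: Hf; rewrite mem_enum => Hf.
  exists nil, w0, t0, f; split => //; split => //; exact: gruns_nil.
Qed.

Lemma star_correct S (A : GVA S) : recognizes (starG A) (lstar (lang A)).
Proof.
move=> w; split.
- move=> [p0 [tau [pf [Hp0 [Hpf R]]]]].
  move: Hp0 Hpf; rewrite !inE => /eqP Ep0 /eqP Epf.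
  exact: ((star_bwd R Epf).1 Ep0 erefl).
- move=> H; exists None, (fun _ => None), None; rewrite !inE; do 2 (split => //).
  exact: star_fwd.
Qed.

Definition isEps S X (al : label S X) : bool := if al is LEps then true else false.
Definition tEps S Q X (t : Q * label S X * guard S X * Q) : bool :=
  match t with (_, al, _, _) => isEps al end.

Definition syncT S Q1 Q2 X1 X2 (t1 : Q1 * label S X1 * guard S X1 * Q1)
  (t2 : Q2 * label S X2 * guard S X2 * Q2) :
  list ((Q1 * Q2) * label S (X1 + X2) * guard S (X1 + X2) * (Q1 * Q2)) :=
  match t1, t2 with
  | (q1, LSym s1, g1, q1'), (q2, LSym s2, g2, q2') =>
      [:: ((q1, q2), LSym (map_sym inl s1),
           GAnd (GAnd (map_guard inl g1) (map_guard inr g2))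
                (GEq (map_sym inl s1) (map_sym inr s2)), (q1', q2'))]
  | _, _ => [::]
  end.

Definition interG S (A1 A2 : GVA S) : GVA S :=
  @Build_GVA S (gst A1 * gst A2)%type (gvar A1 + gvar A2)%type
    [set p | (p.1 \in ginit A1) && (p.2 \in ginit A2)]
    [set p | (p.1 \in gfinal A1) && (p.2 \in gfinal A2)]
    (List.flat_map (fun q2 => List.map (liftT (fun q => (q, q2)) inl)
                      (List.filter (@tEps _ _ _) (gdelta A1))) (enum (gst A2)) ++
    (List.flat_map (fun q1 => List.map (liftT (fun q => (q1, q)) inr)
                      (List.filter (@tEps _ _ _) (gdelta A2))) (enum (gst A1)) ++
     List.flat_map (fun t1 => List.flat_map (fun t2 => syncT t1 t2) (gdelta A2)) (gdelta A1)))
    (fun z => match z with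
              | inl x => [set p | p.1 \in gkappa x]
              | inr y => [set p | p.2 \in gkappa y] end).

Definition vjoin (X1 X2 S : Type) (s1 : X1 -> option S) (s2 : X2 -> option S)
  (z : X1 + X2) : option S :=
  match z with inl x => s1 x | inr y => s2 y end.

Lemma embL_join (X1 X2 S : Type) (t : X1 -> option S) (s2 : X2 -> option S) s :
  emb (@finvL _ _) (vjoin t s2) s = vjoin s s2.
Proof. by apply: functional_extensionality => -[x|y]. Qed.
Lemma embR_join (X1 X2 S : Type) (s1 : X1 -> option S) (t : X2 -> option S) s :
  emb (@finvR _ _) (vjoin s1 t) s = vjoin s1 s.
Proof. by apply: functional_extensionality => -[x|y]. Qed.
Lemma vjoin_none (X1 X2 S : Type) :
  vjoin (fun _ : X1 => @None S) (fun _ : X2 => @None S) = (fun _ => None).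
Proof. by apply: functional_extensionality => -[x|y]. Qed.
Lemma vjoin_split (X1 X2 S : Type) (t : X1 + X2 -> option S) :
  t = vjoin (fun x => t (inl x)) (fun y => t (inr y)).
Proof. by apply: functional_extensionality => -[x|y]. Qed.

Lemma inr_map_inl (X Y : eqType) (y : Y) (s : seq X) : (inr y \in map (@inl X Y) s) = false.
Proof. by elim: s => //= x s IH; rewrite in_cons IH. Qed.
Lemma inl_map_inr (X Y : eqType) (x : X) (s : seq Y) : (inl x \in map (@inr X Y) s) = false.
Proof. by elim: s => //= y s IH; rewrite in_cons IH. Qed.

Lemma sync_fwd S (A1 A2 : GVA S) sy1 g1 q1' s1 c s1' sy2 g2 q2' s2 s2' :
  via (A := A1) (LSym sy1) g1 q1' s1 (Some c) s1' ->
  via (A := A2) (LSym sy2) g2 q2' s2 (Some c) s2' ->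
  via (A := interG A1 A2) (LSym (map_sym inl sy1))
      (GAnd (GAnd (map_guard inl g1) (map_guard inr g2))
            (GEq (map_sym inl sy1) (map_sym inr sy2))) (q1', q2')
      (vjoin s1 s2) (Some c) (vjoin s1' s2').
Proof.
move=> [r1 [H1 [H2 [H3 [[_ H4] H5]]]]] [r2 [K1 [K2 [K3 [[_ K4] K5]]]]].
exists (vjoin r1 r2); split; [|split; [|split; [|split]]].
- by move=> [x|y] /=; [apply: H1|apply: K1].
- move=> [x|y] /= Hz; rewrite !guard_vars_map !sym_vars_map !mem_cat
    ?(mem_map (@inl_inj _ _)) ?(mem_map (@inr_inj _ _)) ?inr_map_inl ?inl_map_inr /=.
  + rewrite H2 //; by case: (x \in sym_vars sy1); case: (x \in guard_vars g1); rewrite /= ?orbT ?orbF.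
  + rewrite K2 //; by case: (y \in sym_vars sy2); case: (y \in guard_vars g2); rewrite /= ?orbT ?orbF.
- rewrite /= !sat_map !sym_val_map; split; first by split.
  by exists c.
- by rewrite sym_val_map.
- by move=> [x|y] /=; rewrite inE /= ?H5 ?K5.
Qed.

Lemma sync_bwd S (A1 A2 : GVA S) sy1 g1 q1' s1 a tau' sy2 g2 q2' s2 :
  via (A := interG A1 A2) (LSym (map_sym inl sy1))
      (GAnd (GAnd (map_guard inl g1) (map_guard inr g2))
            (GEq (map_sym inl sy1) (map_sym inr sy2))) (q1', q2')
      (vjoin s1 s2) a tau' ->
  exists c, a = Some c /\
  via (A := A1) (LSym sy1) g1 q1' s1 a (fun x => tau' (inl x)) /\
  via (A := A2) (LSym sy2) g2 q2' s2 a (fun y => tau' (inr y)).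
Proof.
move=> [r [H1 [H2 [H3 [[Ha Ea] H5]]]]].
move: H3 => /= [[G1 G2] [c [E1 E2]]].
rewrite sym_val_map in E1 E2 Ea; rewrite sat_map in G1; rewrite sat_map in G2.
exists c; have Eac : a = Some c by rewrite Ea E1.
split => //; split.
- exists (fun x => r (inl x)); split; [|split; [|split; [|split]]].
  + by move=> x c' Hx; apply: (H1 (inl x)).
  + move=> x Hx; have := H2 (inl x) Hx.
    rewrite /= !guard_vars_map !sym_vars_map !mem_cat
      ?(mem_map (@inl_inj _ _)) ?inl_map_inr /= => ->.
    by case: (x \in sym_vars sy1); case: (x \in guard_vars g1); rewrite /= ?orbT ?orbF.
  + by [].
  + by [].
  + by move=> x; rewrite H5 /= inE.
- exists (fun x => r (inr x)); split; [|split; [|split; [|split]]].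
  + by move=> x c' Hx; apply: (H1 (inr x)).
  + move=> x Hx; have := H2 (inr x) Hx.
    rewrite /= !guard_vars_map !sym_vars_map !mem_cat
      ?(mem_map (@inr_inj _ _)) ?inr_map_inl /= => ->.
    by case: (x \in sym_vars sy2); case: (x \in guard_vars g2); rewrite /= ?orbT ?orbF.
  + by [].
  + by split; [rewrite Eac | rewrite Eac -E2 ?sym_val_map].
  + by move=> x; rewrite H5 /= inE.
Qed.

Lemma via_eps_label S (A : GVA S) al g q' s s' :
  via (A := A) al g q' s None s' -> al = LEps S _.
Proof. by case: al => // sy [r [_ [_ [_ [[H _] _]]]]]. Qed.

Lemma inter_eps1 S (A1 A2 : GVA S) s2 q2 s q w s' q' :
  @gruns S A1 s q w s' q' -> w = nil -> wf s2 q2 ->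
  @gruns S (interG A1 A2) (vjoin s s2) (q, q2) nil (vjoin s' s2) (q', q2).
Proof.
elim=> [t p|t0 p0 a t1 p1 w0 t2 p2 Hs _ IH] Ew Hw; first exact: gruns_nil.
case: a Ew Hs => [b|] //= Ew Hs.
apply: (gruns_cons (a := None)) (IH Ew Hw).
move/gstepE: Hs => [al [g [Hin Hv]]].
have Eal := via_eps_label Hv; subst al.
apply/gstepE; exists (map_label inl (LEps S _)), (map_guard inl g); split.
- apply: List.in_or_app; left; apply/List.in_flat_map; exists q2; split.
    by apply/In_mem; rewrite mem_enum.
  apply: (List.in_map (liftT (fun q => (q, q2)) inl) _ (p0, LEps S _, g, p1)).
  by apply/List.filter_In.
- have := @via_lift_fwd S A1 (interG A1 A2) (fun q => (q, q2)) inl _ (@finvLP _ _)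
    (vjoin (fun _ => None) s2) _ _ _ _ _ _
    (fun x => ltac:(by rewrite /= inE))
    (fun y => ltac:(by case: y => [x|y] //= _; rewrite inE; apply: Hw)) Hv.
  by rewrite !embL_join.
Qed.

Lemma inter_eps2 S (A1 A2 : GVA S) s1 q1 s q w s' q' :
  @gruns S A2 s q w s' q' -> w = nil -> wf s1 q1 ->
  @gruns S (interG A1 A2) (vjoin s1 s) (q1, q) nil (vjoin s1 s') (q1, q').
Proof.
elim=> [t p|t0 p0 a t1 p1 w0 t2 p2 Hs _ IH] Ew Hw; first exact: gruns_nil.
case: a Ew Hs => [b|] //= Ew Hs.
apply: (gruns_cons (a := None)) (IH Ew Hw).
move/gstepE: Hs => [al [g [Hin Hv]]].
have Eal := via_eps_label Hv; subst al.
apply/gstepE; exists (map_label inr (LEps S _)), (map_guard inr g); split.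
- apply: List.in_or_app; right; apply: List.in_or_app; left.
  apply/List.in_flat_map; exists q1; split.
    by apply/In_mem; rewrite mem_enum.
  apply: (List.in_map (liftT (fun q => (q1, q)) inr) _ (p0, LEps S _, g, p1)).
  by apply/List.filter_In.
- have := @via_lift_fwd S A2 (interG A1 A2) (fun q => (q1, q)) inr _ (@finvRP _ _)
    (vjoin s1 (fun _ => None)) _ _ _ _ _ _
    (fun x => ltac:(by rewrite /= inE))
    (fun y => ltac:(by case: y => [x|y] //= _; rewrite inE; apply: Hw)) Hv.
  by rewrite !embR_join.
Qed.

Lemma via_sym S (A : GVA S) al g q' s c s' :
  via (A := A) al g q' s (Some c) s' -> exists sy, al = LSym sy.
Proof. by case: al => [[r [_ [_ [_ [H _]]]]]|sy _]; [|exists sy]. Qed.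

Lemma inter_fwd S (A1 A2 : GVA S) w : forall s1 q1 s2 q2 s1' f1 s2' f2,
  wf s1 q1 -> wf s2 q2 -> @gruns S A1 s1 q1 w s1' f1 -> @gruns S A2 s2 q2 w s2' f2 ->
  @gruns S (interG A1 A2) (vjoin s1 s2) (q1, q2) w (vjoin s1' s2') (f1, f2).
Proof.
elim: w => [|c w IH] s1 q1 s2 q2 s1' f1 s2' f2 W1 W2 R1 R2.
  have E1 := inter_eps1 (A2 := A2) R1 erefl W2.
  have E2 := inter_eps2 (A1 := A1) R2 erefl (runs_wf R1 W1).
  exact: (gruns_trans E1 E2).
have [t1 [p1 [u1 [r1 [E1 [S1 R1']]]]]] := runs_decomp R1.
have [t2 [p2 [u2 [r2 [E2 [S2 R2']]]]]] := runs_decomp R2.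
have L1 := inter_eps1 (A2 := A2) E1 erefl W2.
have L2 := inter_eps2 (A1 := A1) E2 erefl (runs_wf E1 W1).
have IH' := IH _ _ _ _ _ _ _ _ (step_wf S1) (step_wf S2) R1' R2'.
apply: (gruns_trans L1); apply: (gruns_trans L2).
apply: (gruns_cons (a := Some c)) IH'.
move/gstepE: S1 => [al1 [g1 [In1 V1]]]; move/gstepE: S2 => [al2 [g2 [In2 V2]]].
have [sy1 Ea1] := via_sym V1; have [sy2 Ea2] := via_sym V2; subst al1 al2.
apply/gstepE; eexists; eexists; split; last exact: (sync_fwd V1 V2).
apply: List.in_or_app; right; apply: List.in_or_app; right.
apply/List.in_flat_map; exists (p1, LSym sy1, g1, r1); split => //.
apply/List.in_flat_map; exists (p2, LSym sy2, g2, r2); split => //.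
by left.
Qed.

Lemma inter_bwd S (A1 A2 : GVA S) tau p w tau' p' :
  @gruns S (interG A1 A2) tau p w tau' p' -> forall s1 s2, tau = vjoin s1 s2 ->
  wf s1 p.1 -> wf s2 p.2 ->
  exists s1' s2', tau' = vjoin s1' s2' /\ @gruns S A1 s1 p.1 w s1' p'.1 /\
     @gruns S A2 s2 p.2 w s2' p'.2.
Proof.
elim=> [t p0|t0 p0 a t1 p1 w0 t2 p2 Hs _ IH] s1 s2 Et W1 W2.
  by exists s1, s2; split => //; split; apply: gruns_nil.
subst t0; move/gstepE: Hs => [be [h [Hin Hv]]].
case/List.in_app_iff: Hin => [Hin|/List.in_app_iff [Hin|Hin]].
- move/List.in_flat_map: Hin => [q2 [_ Hin]].
  have [q [al [g [q' [Hin1 [E1 [E2 [E3 E4]]]]]]]] := in_liftT Hin.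
  subst p0 be h p1; move/List.filter_In: Hin1 => [Hin1 Heps].
  rewrite -(embL_join (fun _ => None) s2) in Hv.
  have [s1' [Et1 Hv1]] := @via_lift_bwd S A1 (interG A1 A2) (fun q => (q, q2)) inl _
     (@finvLP _ _) (vjoin (fun _ => None) s2) _ _ q' s1 _ _
     (fun x => ltac:(by rewrite /= inE))
     (fun y => ltac:(by case: y => [x|y] //= _; rewrite inE; apply: W2)) Hv.
  rewrite embL_join in Et1.
  have Hst : @gstep S A1 s1 q a s1' q' by apply/gstepE; exists al, g.
  have Ea : a = None.
    by clear Hin Hv; case: al Heps Hv1 Hin1 Hst => // _ [r [_ [_ [_ [-> _]]]]].
  subst a.
  have [s1'' [s2'' [-> [R1 R2]]]] := IH s1' s2 Et1 (step_wf Hst) W2.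
  exists s1'', s2''; split => //; split; first exact: gruns_cons Hst R1.
  exact: R2.
- move/List.in_flat_map: Hin => [q1 [_ Hin]].
  have [q [al [g [q' [Hin1 [E1 [E2 [E3 E4]]]]]]]] := in_liftT Hin.
  subst p0 be h p1; move/List.filter_In: Hin1 => [Hin1 Heps].
  rewrite -(embR_join s1 (fun _ => None)) in Hv.
  have [s2' [Et1 Hv1]] := @via_lift_bwd S A2 (interG A1 A2) (fun q => (q1, q)) inr _
     (@finvRP _ _) (vjoin s1 (fun _ => None)) _ _ q' s2 _ _
     (fun x => ltac:(by rewrite /= inE))
     (fun y => ltac:(by case: y => [x|y] //= _; rewrite inE; apply: W1)) Hv.
  rewrite embR_join in Et1.
  have Hst : @gstep S A2 s2 q a s2' q' by apply/gstepE; exists al, g.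
  have Ea : a = None.
    by clear Hin Hv; case: al Heps Hv1 Hin1 Hst => // _ [r [_ [_ [_ [-> _]]]]].
  subst a.
  have [s1'' [s2'' [-> [R1 R2]]]] := IH s1 s2' Et1 W1 (step_wf Hst).
  exists s1'', s2''; split => //; split; first exact: R1.
  exact: gruns_cons Hst R2.
- move/List.in_flat_map: Hin => [[[[q1 al1] g1] q1'] [In1 /List.in_flat_map [[[[q2 al2] g2] q2'] [In2 Hin]]]].
  case: al1 In1 Hin => [|sy1] In1 Hin; first by [].
  case: al2 In2 Hin => [|sy2] In2 Hin; first by [].
  case: Hin => [E|//]; case: E => E1 E2 E3 E4; subst p0 be h p1.
  have [c [Ea [V1 V2]]] := sync_bwd Hv.
  have St1 : @gstep S A1 s1 q1 a (fun x => t1 (inl x)) q1' by apply/gstepE; exists (LSym sy1), g1; split; [exact: In1|exact: V1].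
  have St2 : @gstep S A2 s2 q2 a (fun y => t1 (inr y)) q2' by apply/gstepE; exists (LSym sy2), g2; split; [exact: In2|exact: V2].
  have [s1'' [s2'' [-> [R1 R2]]]] := IH _ _ (vjoin_split t1) (step_wf St1) (step_wf St2).
  exists s1'', s2''; split => //; split; [exact: gruns_cons St1 R1|exact: gruns_cons St2 R2].
Qed.

Lemma inter_correct S (A1 A2 : GVA S) :
  recognizes (interG A1 A2) (linter (lang A1) (lang A2)).
Proof.
move=> w; split.
- move=> [[q1 q2] [tau [[f1 f2] [Hq [Hf R]]]]].
  move: Hq Hf; rewrite !inE /= => /andP [Hq1 Hq2] /andP [Hf1 Hf2].
  have [s1' [s2' [_ [R1 R2]]]] := inter_bwd R (esym (vjoin_none _ _ _)) (fun _ _ => erefl)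
    (fun _ _ => erefl).
  by split; [exists q1, s1', f1|exists q2, s2', f2].
- move=> [[q1 [s1 [f1 [Hq1 [Hf1 R1]]]]] [q2 [s2 [f2 [Hq2 [Hf2 R2]]]]]].
  exists (q1, q2), (vjoin s1 s2), (f1, f2); rewrite !inE /= Hq1 Hq2 Hf1 Hf2; split => //; split => //.
  rewrite -vjoin_none; exact: inter_fwd.
Qed.

Theorem mainTheorem1 (Sigma : Type) (Hinf : infinite_alphabet Sigma)
    (A1 A2 : GVA Sigma) :
  (exists B : GVA Sigma, recognizes B (lconcat (lang A1) (lang A2))) /\
  (exists B : GVA Sigma, recognizes B (lstar (lang A1))) /\
  (exists B : GVA Sigma, recognizes B (linter (lang A1) (lang A2))).
Proof.
split; [exists (concatG A1 A2); exact: concat_correct|].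
split; [exists (starG A1); exact: star_correct|].
exists (interG A1 A2); exact: inter_correct.
Qed.
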